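(* Identify $e_1,e_2,e_3$ with the three non-zero elements of the field $\mathbb F_4$ of order $4$. Let $g:1\to n$ be a morphism of $\mathbf{PCG}$ and $i,i(1),\dots,i(n)\in\{1,2,3\}$. If $\langle F(g)(e_i),e_{i(1)}\otimes\cdots\otimes e_{i(n)}\rangle\neq0$, then $e_i=e_{i(1)}+\cdots+e_{i(n)}$ in $\mathbb F_4$. Consequently, for any two morphisms $f,g:1\to n$ of $\mathbf{PCG}$, $\langle F(g)(e_i),F(f)(e_j)\rangle=0$ whenever $i\neq j$.
   Context: Let $\mathbb K$ be a field of characteristic zero, $V$ a $3$-dimensional $\mathbb K$-vector space with basis $\{e_1,e_2,e_3\}$, and $V^{\otimes n}$ carries the inner product making $\{e_{i(1)}\otimes\cdots\otimes e_{i(n)}\}$ orthonormal. $\mathbf{CG}$ is the strict monoidal category whose objects are non-negative integers and whose morphisms $m\to n$ are PL regular immersions in the strip $\mathbb R\times[0,1]$ of graphs with all vertices of degree $3$ except $m$ top and $n$ bottom free ends (closed vertex-free loops allowed); composition stacks, tensor places side by side. It is generated by $\cap:0\to2$, $\cup:2\to0$, $\lambda:1\to2$ (vertex with one top, two bottom ends), $y:2\to1$, $x:2\to2$ (crossing), $I=id_1$. $\mathbf{PCG}$ is the subcategory generated by $\cap,\cup,\lambda,y,I$ (planar graphs). The monoidal functor $F$ has $F(n)=V^{\otimes n}$, $F(\cap)(1)=\sum_i e_i\otimes e_i$, $F(\cup)(e_i\otimes e_j)=\delta_{i,j}$, $F(\lambda)(e_i)=\sum e_j\otimes e_k$ over ordered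 $(j,k)$ with $\{i,j,k\}=\{1,2,3\}$, $F(y)(e_i\otimes e_j)=e_k$ if $\{i,j,k\}=\{1,2,3\}$ and $0$ if $i=j$, $F(I)=id_V$. *)

(* Defs.v *)
From HB Require Import structures.
From mathcomp Require Import all_boot all_order all_algebra.
Set Implicit Arguments. Unset Strict Implicit. Unset Printing Implicit Defensive.
Import GRing.Theory.
Local Open Scope ring_scope.

(* Generating expressions for morphisms of PCG (planar closed graphs).
   [pcg m n] : expressions for morphisms m -> n, built from the generators
   cap : 0 -> 2, cup : 2 -> 0, lambda : 1 -> 2, y : 2 -> 1, I = id_1 (and id_0,
   the empty diagram) by composition (stacking) and tensor (juxtaposition).
   Every morphism of PCG is represented by such an expression. *)
Inductive pcg : nat -> nat -> Type :=
| PCap : pcg 0 2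
| PCup : pcg 2 0
| PLam : pcg 1 2
| PY : pcg 2 1
| PI : pcg 1 1
| PId0 : pcg 0 0
| PComp : forall m k n, pcg m k -> pcg k n -> pcg m n
| PTens : forall m1 n1 m2 n2, pcg m1 n1 -> pcg m2 n2 -> pcg (m1 + m2)%N (n1 + n2)%N.

(* Basis vector e_{i(1)} (x) ... (x) e_{i(n)} is indexed by the sequence
   [:: i(1); ...; i(n)] of elements of 'I_3 (0,1,2 stand for e_1,e_2,e_3). *)
Definition distinct3 (i j k : 'I_3) : bool := [&& i != j, j != k & i != k].

Section Functor.
Variable K : fieldType.

(* [Fcoef g s t] = < F(g)(e_s), e_t >, the matrix coefficient of F(g). *)
Fixpoint Fcoef m n (g : pcg m n) : seq 'I_3 -> seq 'I_3 -> K :=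
  match g with
  | PCap => fun s t => if (s, t) is ([::], [:: a; b]) then (a == b)%:R else 0
  | PCup => fun s t => if (s, t) is ([:: a; b], [::]) then (a == b)%:R else 0
  | PLam => fun s t => if (s, t) is ([:: i], [:: j; k]) then (distinct3 i j k)%:R else 0
  | PY => fun s t => if (s, t) is ([:: i; j], [:: k]) then (distinct3 i j k)%:R else 0
  | PI => fun s t => if (s, t) is ([:: i], [:: j]) then (i == j)%:R else 0
  | PId0 => fun s t => if (s, t) is ([::], [::]) then 1 else 0
  | PComp m k n f h => fun s t =>
      \sum_(u : k.-tuple 'I_3) Fcoef f s u * Fcoef h u t
  | PTens m1 n1 m2 n2 f h => fun s t =>
      Fcoef f (take m1 s) (take n1 t) * Fcoef h (drop m1 s) (drop n1 t)
  end.

(* Inner product < F(g)(e_s), F(f)(e_r) > for g, f : 1 -> n (orthonormal basis). *)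
Definition Finner n (g f : pcg 1 n) (s r : seq 'I_3) : K :=
  \sum_(t : n.-tuple 'I_3) Fcoef g s t * Fcoef f r t.
End Functor.

(* Main.v *)
Require Import Defs.
From HB Require Import structures.
From mathcomp Require Import all_boot all_order all_algebra all_field.
Import GRing.Theory.
Local Open Scope ring_scope.

Section Aux.
Variables (F4 : finFieldType) (cardF4 : #|F4| = 4%N)
  (phi : 'I_3 -> F4) (phi_inj : injective phi) (phi_nz : forall i, phi i != 0).

Lemma two0 (x : F4) : x + x = 0.
Proof.
have h : (2 \in [pchar F4])%N by apply: (@card_finPcharP _ 2 2).
by rewrite -mulr2n -mulr_natr (pcharf0 h) mulr0.
Qed.

Lemma opp4 (y : F4) : - y = y.
Proof. by apply/eqP; rewrite eq_sym -subr_eq0 opprK two0. Qed.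

Lemma dist3 (i j k : 'I_3) : distinct3 i j k -> phi i = phi j + phi k.
Proof.
case/and3P=> ij jk ik.
set x := phi j + phi k.
have nij : phi i != phi j by apply: contra ij => /eqP/phi_inj ->.
have njk : phi j != phi k by apply: contra jk => /eqP/phi_inj ->.
have nik : phi i != phi k by apply: contra ik => /eqP/phi_inj ->.
apply/eqP; apply: contraT => nix.
have x0 : x != 0 by rewrite /x addr_eq0 opp4.
have xj : x != phi j.
  apply: contra (phi_nz k) => /eqP h; apply/eqP.
  by apply: (@addrI _ (phi j)); rewrite addr0.
have xk : x != phi k.
  apply: contra (phi_nz j) => /eqP h; apply/eqP.
  by apply: (@addIr _ (phi k)); rewrite add0r.
have u : uniq [:: 0; phi i; phi j; phi k; x].
  rewrite /= !inE !negb_or !(eq_sym 0) !phi_nz x0 nij nik njk.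
  by rewrite nix (eq_sym (phi j)) (eq_sym (phi k)) xj xk.
have := uniq_leq_size u (fun y _ => mem_enum F4 y).
by rewrite -cardE cardF4.
Qed.

Lemma gen (m n : nat) (g : pcg m n) (s t : seq 'I_3) (K : fieldType) :
  Fcoef K g s t != 0 -> \sum_(x <- s) phi x = \sum_(x <- t) phi x.
Proof.
elim: g s t => /=.
- move=> [|x1 [|x2 [|x3 s]]] [|y1 [|y2 [|y3 t]]] /=; rewrite ?eqxx //.
  have [-> _|nab] := eqVneq y1 y2; last by rewrite eqxx.
  by rewrite !big_cons !big_nil addr0 two0.
- move=> [|x1 [|x2 [|x3 s]]] [|y1 [|y2 [|y3 t]]] /=; rewrite ?eqxx //.
  have [-> _|nab] := eqVneq x1 x2; last by rewrite eqxx.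
  by rewrite !big_cons !big_nil addr0 two0.
- move=> [|x1 [|x2 [|x3 s]]] [|y1 [|y2 [|y3 t]]] /=; rewrite ?eqxx //.
  case: (boolP (distinct3 _ _ _)) => [d _|nd]; last by rewrite eqxx.
  by rewrite !big_cons !big_nil !addr0 (dist3 _ _ _ d).
- move=> [|x1 [|x2 [|x3 s]]] [|y1 [|y2 [|y3 t]]] /=; rewrite ?eqxx //.
  case: (boolP (distinct3 _ _ _)) => [d _|nd]; last by rewrite eqxx.
  have d' : distinct3 y1 x1 x2.
    by case/and3P: d => a b c; apply/and3P; split; rewrite // eq_sym.
  by rewrite !big_cons !big_nil !addr0 (dist3 _ _ _ d').
- move=> [|x1 [|x2 [|x3 s]]] [|y1 [|y2 [|y3 t]]] /=; rewrite ?eqxx //.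
  have [-> _|nab] := eqVneq x1 y1; last by rewrite eqxx.
  by [].
- by move=> [|x1 s] [|y1 t] /=; rewrite ?eqxx.
- move=> m0 k0 n0 f IHf h IHh s t nz.
  have [u _ nzu] : exists2 u : k0.-tuple 'I_3, true & Fcoef K f s u * Fcoef K h u t != 0.
    apply/exists_inP; apply: contraR nz => /exists_inPn H.
    by apply/eqP; apply: big1 => u _; apply/eqP/negbNE/H.
  move: nzu; rewrite mulf_eq0 negb_or => /andP[a b].
  by rewrite (IHf _ _ a) (IHh _ _ b).
- move=> m1 n1 m2 n2 f IHf h IHh s t; rewrite mulf_eq0 negb_or => /andP[a b].
  by rewrite -(cat_take_drop m1 s) -(cat_take_drop n1 t) !big_cat (IHf _ _ a) (IHh _ _ b).
Qed.
End Aux.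

Theorem mainTheorem6 (K : fieldType) (charK0 : [pchar K] =i pred0)
  (F4 : finFieldType) (cardF4 : #|F4| = 4%N)
  (phi : 'I_3 -> F4) (phi_inj : injective phi) (phi_nz : forall i, phi i != 0)
  (n : nat) (g : pcg 1 n) :
  (forall (i : 'I_3) (t : n.-tuple 'I_3),
      Fcoef K g [:: i] t != 0 -> phi i = \sum_(x <- t) phi x) /\
  (forall (f : pcg 1 n) (i j : 'I_3), i != j -> Finner K g f [:: i] [:: j] = 0).
Proof.
have G := @gen F4 cardF4 phi phi_inj phi_nz.
split.
  by move=> i t /G <-; rewrite big_seq1.
move=> f i j ij; rewrite /Finner; apply: big1 => t _.
apply/eqP; rewrite mulf_eq0; apply: contraR ij; rewrite negb_or => /andP[a b].
apply/eqP/phi_inj.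
have Ha := G _ _ _ _ _ _ a; have Hb := G _ _ _ _ _ _ b.
rewrite big_seq1 in Ha; rewrite big_seq1 in Hb.
by rewrite Ha Hb.
Qed.
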